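(* Let $T=\{0,\dots,N\}$, and let $M'_\bullet, M''_\bullet\subseteq M_\bullet$ be filtrations of finite-dimensional vector spaces over a field $\mathbb{F}$ indexed by $T$ (i.e. $M'_t,M''_t\subseteq M_t$ for all $t$). Let $\mathfrak{M}'$ and $\mathfrak{M}''$ be filtration compatible bases for $M'_\bullet$ and $M''_\bullet$ respectively, such that $\mathfrak{M}'\cup\mathfrak{M}''$ is linearly independent. Then $\mathfrak{M}'\cap\mathfrak{M}''$ is a filtration compatible basis for the filtration $M'_\bullet\cap M''_\bullet$ given by $(M'_\bullet\cap M''_\bullet)_t=M'_t\cap M''_t$. Moreover, for all $m\in\mathfrak{M}'\cap\mathfrak{M}''$, \[ \operatorname{supp}_{M'_\bullet\cap M''_\bullet}(m)=\operatorname{supp}_{M'_\bullet}(m)\cap\operatorname{supp}_{M''_\bullet}(m). \]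
   Context: A filtration of a vector space $M$ indexed by $T=\{0,\dots,N\}$ is a family of subspaces $M_0\subseteq M_1\subseteq\dots\subseteq M_N=M$, with structure maps the inclusions. For $m\in M_N$, its support is $\operatorname{supp}_{M_\bullet}(m)=\{t\in T\mid m\in M_t\}$. A basis $\mathfrak{M}$ of $M_N$ is filtration compatible if $\mathfrak{M}\cap M_t$ is a basis of $M_t$ for every $t\in T$. *)

(* Defs.v *)
From HB Require Import structures.
From mathcomp Require Import all_boot all_order all_algebra.
Set Implicit Arguments. Unset Strict Implicit. Unset Printing Implicit Defensive.
Import GRing.Theory.
Local Open Scope ring_scope.

Section Filt.
Variables (F : fieldType) (vT : vectType F) (N : nat).

Definition filtration (M : 'I_N.+1 -> {vspace vT}) : Prop :=
  forall s t : 'I_N.+1, (s <= t)%N -> (M s <= M t)%VS.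

(* The basis B (a duplicate-free list of vectors, i.e. a finite set) is a
   filtration compatible basis of M: it is a basis of M_N and, for every t,
   B ∩ M_t is a basis of M_t. *)
Definition filt_compat_basis (M : 'I_N.+1 -> {vspace vT}) (B : seq vT) : Prop :=
  basis_of (M ord_max) B /\
  forall t : 'I_N.+1, basis_of (M t) [seq x <- B | x \in M t].

Definition supp (M : 'I_N.+1 -> {vspace vT}) (m : vT) : {set 'I_N.+1} :=
  [set t | m \in M t].

Definition filt_cap (M1 M2 : 'I_N.+1 -> {vspace vT}) : 'I_N.+1 -> {vspace vT} :=
  fun t => (M1 t :&: M2 t)%VS.
End Filt.

(* Main.v *)
Require Import Defs.
From HB Require Import structures.
From mathcomp Require Import all_boot all_order all_algebra.
From mathcomp Require Import zify.
Import GRing.Theory.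
Local Open Scope ring_scope.

Section Aux.
Context {F : fieldType} {vT : vectType F}.

Lemma sub_free {U S : seq vT} : free U -> uniq S -> {subset S <= U} -> free S.
Proof.
move=> fU uS sSU.
have uU := free_uniq fU.
have P : perm_eq U (S ++ [seq x <- U | x \notin S]).
  apply: uniq_perm => //.
    rewrite cat_uniq uS filter_uniq // andbT.
    by apply/hasPn => x; rewrite mem_filter => /andP[].
  move=> x; rewrite mem_cat mem_filter.
  by case xS: (x \in S) => //=; rewrite (sSU _ xS).
by move: fU; rewrite (perm_free P) => /catl_free.
Qed.

Lemma cap_span {U S1 S2 : seq vT} : free U -> uniq S1 -> uniq S2 ->
  {subset S1 <= U} -> {subset S2 <= U} ->
  (<<S1>> :&: <<S2>> = <<[seq x <- S1 | x \in S2]>>)%VS /\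
  free [seq x <- S1 | x \in S2].
Proof.
move=> fU u1 u2 s1 s2.
set I := [seq x <- S1 | x \in S2].
set D := [seq x <- S2 | x \notin S1].
have uI : uniq I by rewrite filter_uniq.
have fI : free I.
  by apply: (sub_free fU uI); move=> x; rewrite mem_filter => /andP[_ /s1].
have f1 : free S1 by apply: sub_free fU u1 s1.
have f2 : free S2 by apply: sub_free fU u2 s2.
have fD : free (S1 ++ D).
  apply: (sub_free fU).
    rewrite cat_uniq u1 filter_uniq // andbT.
    by apply/hasPn => x; rewrite mem_filter => /andP[].
  by move=> x; rewrite mem_cat mem_filter => /orP[/s1|/andP[_ /s2]].
have espan : (<<S1 ++ D>> = <<S1>> + <<S2>>)%VS.
  rewrite -span_cat; apply: eq_span => x; rewrite !mem_cat mem_filter.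
  by case: (x \in S1).
have sizeI : size I = count (mem S1) S2.
  rewrite -size_filter; apply: perm_size; apply: uniq_perm; rewrite ?filter_uniq //.
  by move=> x; rewrite !mem_filter andbC.
have hdim := dimv_sum_cap <<S1>> <<S2>>.
move: (fD) (f1) (f2) (fI); rewrite /free espan => /eqP d12 /eqP d1 /eqP d2 /eqP dI.
have sub : (<<I>> <= <<S1>> :&: <<S2>>)%VS.
  apply/span_subvP => x; rewrite mem_filter memv_cap => /andP[x2 x1].
  by rewrite !memv_span.
split=> //; apply/eqP; rewrite eq_sym eqEdim sub /= dI sizeI.
move: hdim; rewrite d12 d1 d2 size_cat /D size_filter.
have := count_predC (mem S1) S2.
move=> h1 h2.
have e : count (predC (mem S1)) S2 = count (fun x => x \notin S1) S2 by [].
rewrite e in h1; rewrite -sizeI in h1 *; move: h1 h2; move: (\dim _) (count _ _) (size I) (size S1) (size S2) => a b c d f; lia.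
Qed.
End Aux.

Theorem lemma2p6 (F : fieldType) (vT : vectType F) (N : nat)
    (M M1 M2 : 'I_N.+1 -> {vspace vT}) (B1 B2 : seq vT) :
  filtration M -> filtration M1 -> filtration M2 ->
  (forall t, (M1 t <= M t)%VS) -> (forall t, (M2 t <= M t)%VS) ->
  filt_compat_basis M1 B1 -> filt_compat_basis M2 B2 ->
  free (undup (B1 ++ B2)) ->
  filt_compat_basis (filt_cap M1 M2) [seq x <- B1 | x \in B2] /\
  (forall m, m \in B1 -> m \in B2 ->
     supp (filt_cap M1 M2) m = (supp M1 m :&: supp M2 m)%SET).
Proof.
move=> _ _ _ _ _ [bB1 hB1] [bB2 hB2] fU.
have u1 := free_uniq (basis_free bB1).
have u2 := free_uniq (basis_free bB2).
have s1 : {subset B1 <= undup (B1 ++ B2)}.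
  by move=> x; rewrite mem_undup mem_cat => ->.
have s2 : {subset B2 <= undup (B1 ++ B2)}.
  by move=> x; rewrite mem_undup mem_cat orbC => ->.
split; last first.
  by move=> m _ _; apply/setP => t; rewrite !inE /filt_cap memv_cap.
split.
  have [e f] := cap_span fU u1 u2 s1 s2.
  move: bB1 bB2 => /andP[/eqP e1 _] /andP[/eqP e2 _].
  by rewrite /basis_of /filt_cap -e1 -e2 e f eqxx.
move=> t.
have sa : {subset [seq x <- B1 | x \in M1 t] <= undup (B1 ++ B2)}.
  by move=> x; rewrite mem_filter => /andP[_ /s1].
have sb : {subset [seq x <- B2 | x \in M2 t] <= undup (B1 ++ B2)}.
  by move=> x; rewrite mem_filter => /andP[_ /s2].
have [e f] := cap_span fU (filter_uniq _ u1) (filter_uniq _ u2) sa sb.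
move: (hB1 t) (hB2 t) => /andP[/eqP e1 _] /andP[/eqP e2 _].
have El : [seq x <- [seq x <- B1 | x \in B2] | x \in filt_cap M1 M2 t] =
          [seq x <- [seq x <- B1 | x \in M1 t] | x \in [seq x <- B2 | x \in M2 t]].
  rewrite -!filter_predI; apply: eq_in_filter => x _ /=.
  by rewrite /filt_cap memv_cap mem_filter; case: (x \in B2); case: (x \in M1 t);
     case: (x \in M2 t).
by rewrite El /basis_of f andbT -e /filt_cap e1 e2.
Qed.
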